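(* The functors $T\circ\mathbf F_{\mathcal{WHB}}$ and $\mathbf F_{\mathcal{TBA}}$ from $\mathsf{Set}$ to $\mathsf{TBA}$ are naturally isomorphic.
   Context: A WHB-algebra is an algebra $(A,\wedge,\vee,\to,\leftarrow,0,1)$ such that $(A,\wedge,\vee,0,1)$ is a bounded distributive lattice and for all $a,b,c\in A$: $a\to a=1$; $a\to(b\wedge c)=(a\to b)\wedge(a\to c)$; $(a\vee b)\to c=(a\to c)\wedge(b\to c)$; $(a\to b)\wedge(b\to c)\le a\to c$; $a\leftarrow a=0$; $(a\vee b)\leftarrow c=(a\leftarrow c)\vee(b\leftarrow c)$; $a\leftarrow(b\wedge c)=(a\leftarrow b)\vee(a\leftarrow c)$; $a\leftarrow c\le(a\leftarrow b)\vee(b\leftarrow c)$; $a\wedge((a\to b)\leftarrow 0)\le b$; $a\le b\vee(1\to(a\leftarrow b))$. A tense algebra is $(\mathbf B,G,H)$ with $\mathbf B$ a Boolean algebra and unary $G,H$ such that, with $P(x)=\neg H(\neg x)$, $F(x)=\neg G(\neg x)$: $P(x)\le y\iff x\le G(y)$ and $F(x)\le y\iff x\le H(y)$; $\mathsf{TBA}$ is the category of tense algebras and homomorphisms, $\mathsf{WHB}$ that of WHB-algebras. For a variety $\mathcal V$, $\mathbf F_{\mathcal V}\colon\mathsf{Set}\to\mathcal V$ is the free-algebra functor: $\mathbf F_{\mathcal V}(X)$ is the $\mathcal V$-free algebra over $X$ and, for $l\colon X\to Y$, $\mathbf F_{\mathcal V}(l)$ is the unique homomorphism extending $x\mapsto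 l(x)$. For a WHB-algebra $\mathbf A$: $X(\mathbf A)$ is its set of prime filters, $\sigma_{\mathbf A}(a)=\{P\colon a\in P\}$, $\tau_{\mathbf A}$ the topology with subbase $\{\sigma_{\mathbf A}(a)\}\cup\{X(\mathbf A)\setminus\sigma_{\mathbf A}(a)\}$; $(P,Q)\in R_{\mathbf A}$ iff for all $a,b$ ($a\to b\in P$, $a\in Q$ imply $b\in Q$); $(P,Q)\in S_{\mathbf A}$ iff for all $a,b$ ($a\in Q$, $b\notin Q$ imply $a\leftarrow b\in P$). $T(\mathbf A)$ is the Boolean algebra of $\tau_{\mathbf A}$-clopen subsets of $X(\mathbf A)$ with $G_{\mathbf A}(U)=\{P\colon R_{\mathbf A}(P)\subseteq U\}$ and $H_{\mathbf A}(U)=\{P\colon S_{\mathbf A}(P)\subseteq U\}$ (where $\mathcal R(P)=\{Q\colon(P,Q)\in\mathcal R\}$); for a homomorphism $h\colon\mathbf A\to\mathbf B$, $T(h)(U)=\{Q\in X(\mathbf B)\colon h^{-1}(Q)\in U\}$. *)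

(* Defs.v *)
From Stdlib Require Import List.
Import ListNotations.
Set Implicit Arguments.

Record bdl_axioms (A : Type) (meet join : A -> A -> A) (z o : A) : Prop := {
  meetC : forall a b, meet a b = meet b a;
  joinC : forall a b, join a b = join b a;
  meetA : forall a b c, meet a (meet b c) = meet (meet a b) c;
  joinA : forall a b c, join a (join b c) = join (join a b) c;
  meet_absorb : forall a b, meet a (join a b) = a;
  join_absorb : forall a b, join a (meet a b) = a;
  meet_distr : forall a b c, meet a (join b c) = join (meet a b) (meet a c);
  join0 : forall a, join a z = a;
  meet1 : forall a, meet a o = a
}.

Record WHB := {
  wcar :> Type;
  wmeet : wcar -> wcar -> wcar;
  wjoin : wcar -> wcar -> wcar;
  wimp : wcar -> wcar -> wcar;
  wcoimp : wcar -> wcar -> wcar;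
  w0 : wcar;
  w1 : wcar
}.

Definition wle {A : WHB} (a b : A) : Prop := wmeet A a b = a.

Record whb_axioms (A : WHB) : Prop := {
  whb_bdl : bdl_axioms (wmeet A) (wjoin A) (w0 A) (w1 A);
  whb_imp_refl : forall a : A, wimp A a a = w1 A;
  whb_imp_meet : forall a b c : A,
      wimp A a (wmeet A b c) = wmeet A (wimp A a b) (wimp A a c);
  whb_imp_join : forall a b c : A,
      wimp A (wjoin A a b) c = wmeet A (wimp A a c) (wimp A b c);
  whb_imp_trans : forall a b c : A,
      wle (A:=A) (wmeet A (wimp A a b) (wimp A b c)) (wimp A a c);
  whb_coimp_refl : forall a : A, wcoimp A a a = w0 A;
  whb_coimp_join : forall a b c : A,
      wcoimp A (wjoin A a b) c = wjoin A (wcoimp A a c) (wcoimp A b c);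
  whb_coimp_meet : forall a b c : A,
      wcoimp A a (wmeet A b c) = wjoin A (wcoimp A a b) (wcoimp A a c);
  whb_coimp_trans : forall a b c : A,
      wle (A:=A) (wcoimp A a c) (wjoin A (wcoimp A a b) (wcoimp A b c));
  whb_ax9 : forall a b : A, wle (A:=A) (wmeet A a (wcoimp A (wimp A a b) (w0 A))) b;
  whb_ax10 : forall a b : A, wle (A:=A) a (wjoin A b (wimp A (w1 A) (wcoimp A a b)))
}.

Definition whb_hom {A B : WHB} (f : A -> B) : Prop :=
  (forall a b, f (wmeet A a b) = wmeet B (f a) (f b)) /\
  (forall a b, f (wjoin A a b) = wjoin B (f a) (f b)) /\
  (forall a b, f (wimp A a b) = wimp B (f a) (f b)) /\
  (forall a b, f (wcoimp A a b) = wcoimp B (f a) (f b)) /\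
  f (w0 A) = w0 B /\ f (w1 A) = w1 B.

Definition is_free_whb {X : Type} {A : WHB} (i : X -> A) : Prop :=
  whb_axioms A /\
  forall (B : WHB), whb_axioms B -> forall f : X -> B,
    (exists h : A -> B, whb_hom h /\ forall x, h (i x) = f x) /\
    (forall h1 h2 : A -> B, whb_hom h1 -> whb_hom h2 ->
       (forall x, h1 (i x) = f x) -> (forall x, h2 (i x) = f x) ->
       forall a, h1 a = h2 a).

Record TBA := {
  tcar :> Type;
  tmeet : tcar -> tcar -> tcar;
  tjoin : tcar -> tcar -> tcar;
  tneg : tcar -> tcar;
  t0 : tcar;
  t1 : tcar;
  tG : tcar -> tcar;
  tH : tcar -> tcar
}.

Definition tle {B : TBA} (a b : B) : Prop := tmeet B a b = a.
Definition tP {B : TBA} (x : B) : B := tneg B (tH B (tneg B x)).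
Definition tF {B : TBA} (x : B) : B := tneg B (tG B (tneg B x)).

Record tba_axioms (B : TBA) : Prop := {
  tba_bdl : bdl_axioms (tmeet B) (tjoin B) (t0 B) (t1 B);
  tba_compl_meet : forall a : B, tmeet B a (tneg B a) = t0 B;
  tba_compl_join : forall a : B, tjoin B a (tneg B a) = t1 B;
  tba_PG : forall x y : B, tle (B:=B) (tP x) y <-> tle (B:=B) x (tG B y);
  tba_FH : forall x y : B, tle (B:=B) (tF x) y <-> tle (B:=B) x (tH B y)
}.

Definition tba_hom {A B : TBA} (f : A -> B) : Prop :=
  (forall a b, f (tmeet A a b) = tmeet B (f a) (f b)) /\
  (forall a b, f (tjoin A a b) = tjoin B (f a) (f b)) /\
  (forall a, f (tneg A a) = tneg B (f a)) /\
  f (t0 A) = t0 B /\ f (t1 A) = t1 B /\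
  (forall a, f (tG A a) = tG B (f a)) /\
  (forall a, f (tH A a) = tH B (f a)).

Definition is_free_tba {X : Type} {A : TBA} (i : X -> A) : Prop :=
  tba_axioms A /\
  forall (B : TBA), tba_axioms B -> forall f : X -> B,
    (exists h : A -> B, tba_hom h /\ forall x, h (i x) = f x) /\
    (forall h1 h2 : A -> B, tba_hom h1 -> tba_hom h2 ->
       (forall x, h1 (i x) = f x) -> (forall x, h2 (i x) = f x) ->
       forall a, h1 a = h2 a).

(* A subset of A is a predicate; subsets of X(A) are predicates on subsets
   of A, only their values on prime filters matter. *)
Definition pset (A : WHB) := (A -> Prop) -> Prop.

Definition prime_filter {A : WHB} (P : A -> Prop) : Prop :=
  P (w1 A) /\ ~ P (w0 A) /\
  (forall a b, P a -> P b -> P (wmeet A a b)) /\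
  (forall a b, P a -> wle a b -> P b) /\
  (forall a b, P (wjoin A a b) -> P a \/ P b).

Definition sigma {A : WHB} (a : A) : pset A := fun P => P a.

(* subbase element: (true, a) ~ sigma(a); (false, a) ~ X(A) \ sigma(a) *)
Definition subbasic {A : WHB} (p : bool * A) : pset A :=
  fun P => if fst p then P (snd p) else ~ P (snd p).

Definition t_open {A : WHB} (U : pset A) : Prop :=
  forall P, prime_filter P -> U P ->
    exists l : list (bool * A),
      Forall (fun p => subbasic p P) l /\
      forall Q, prime_filter Q -> Forall (fun p => subbasic p Q) l -> U Q.

Definition t_closed {A : WHB} (U : pset A) : Prop :=
  t_open (fun P => ~ U P).

Definition clopen {A : WHB} (U : pset A) : Prop := t_open U /\ t_closed U.

Definition pseteq {A : WHB} (U V : pset A) : Prop :=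
  forall P, prime_filter P -> (U P <-> V P).

Definition relR {A : WHB} (P Q : A -> Prop) : Prop :=
  forall a b, P (wimp A a b) -> Q a -> Q b.
Definition relS {A : WHB} (P Q : A -> Prop) : Prop :=
  forall a b, Q a -> ~ Q b -> P (wcoimp A a b).

Definition G_op {A : WHB} (U : pset A) : pset A :=
  fun P => forall Q, prime_filter Q -> relR P Q -> U Q.
Definition H_op {A : WHB} (U : pset A) : pset A :=
  fun P => forall Q, prime_filter Q -> relS P Q -> U Q.

Definition T_map {A B : WHB} (h : A -> B) (U : pset A) : pset B :=
  fun Q => U (fun a => Q (h a)).

Definition iso_onto_T {A : WHB} {B : TBA} (theta : B -> pset A) : Prop :=
  (forall b, clopen (theta b)) /\
  (forall b c, pseteq (theta (tmeet B b c)) (fun P => theta b P /\ theta c P)) /\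
  (forall b c, pseteq (theta (tjoin B b c)) (fun P => theta b P \/ theta c P)) /\
  (forall b, pseteq (theta (tneg B b)) (fun P => ~ theta b P)) /\
  pseteq (theta (t0 B)) (fun _ => False) /\
  pseteq (theta (t1 B)) (fun _ => True) /\
  (forall b, pseteq (theta (tG B b)) (G_op (theta b))) /\
  (forall b, pseteq (theta (tH B b)) (H_op (theta b))) /\
  (forall b c, pseteq (theta b) (theta c) -> b = c) /\
  (forall U, clopen U -> exists b, pseteq (theta b) U).

(* Main.v *)
From Stdlib Require Import List Classical FunctionalExtensionality PropExtensionality ProofIrrelevance ClassicalEpsilon.
From mathcomp Require classical_sets.
Require Import Defs.
Import ListNotations.


Lemma zorn_sets (T : Type) (P : (T -> Prop) -> Prop) :
  (forall F : (T -> Prop) -> Prop, (forall X, F X -> P X) ->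
     (forall X Y, F X -> F Y -> (forall t, X t -> Y t) \/ (forall t, Y t -> X t)) ->
     P (fun t => exists2 X, F X & X t)) ->
  exists A, P A /\ forall B, (forall t, A t -> B t) -> P B -> forall t, B t -> A t.
Proof.
  intros H. destruct (@classical_sets.Zorn_bigcup T P) as [A [PA HA]].
  - intros F HF Htot. apply H; [exact HF| exact Htot].
  - exists A; split; [exact PA|]. intros B AB PB t Bt. apply NNPP; intro nAt.
    apply (HA B); [split; [exact AB| intro BA; apply nAt, BA, Bt] | exact PB].
Qed.

Section Lat.
Variables (T : Type) (meet join : T -> T -> T) (z o : T).
Hypothesis Hb : bdl_axioms meet join z o.

Definition lle a b := meet a b = a.
Definition pf (P : T -> Prop) : Prop :=
  P o /\ ~ P z /\ (forall a b, P a -> P b -> P (meet a b)) /\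
  (forall a b, P a -> lle a b -> P b) /\ (forall a b, P (join a b) -> P a \/ P b).

Lemma meet_idem a : meet a a = a.
Proof. transitivity (meet a (join a (meet a a))). f_equal; symmetry; apply (join_absorb Hb). apply (meet_absorb Hb). Qed.
Lemma join_idem a : join a a = a.
Proof. transitivity (join a (meet a (join a a))). f_equal; symmetry; apply (meet_absorb Hb). apply (join_absorb Hb). Qed.
Lemma le_refl a : lle a a.
Proof. apply meet_idem. Qed.
Lemma le_trans a b c : lle a b -> lle b c -> lle a c.
Proof. unfold lle; intros H1 H2. rewrite <- H1, <- (meetA Hb), H2. reflexivity. Qed.
Lemma le_antisym a b : lle a b -> lle b a -> a = b.
Proof. unfold lle; intros H1 H2. rewrite <- H1, (meetC Hb). exact H2. Qed.
Lemma le_meet_l a b : lle (meet a b) a.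
Proof. unfold lle. rewrite (meetC Hb a b), <- (meetA Hb), meet_idem. reflexivity. Qed.
Lemma le_meet_r a b : lle (meet a b) b.
Proof. unfold lle. rewrite <- (meetA Hb), meet_idem. reflexivity. Qed.
Lemma le_glb a b c : lle c a -> lle c b -> lle c (meet a b).
Proof. unfold lle; intros H1 H2. rewrite (meetA Hb), H1, H2. reflexivity. Qed.
Lemma le_join_iff a b : lle a b <-> join a b = b.
Proof. unfold lle; split; intro H.
  - rewrite <- H, (joinC Hb), (meetC Hb). apply (join_absorb Hb).
  - rewrite <- H. apply (meet_absorb Hb). Qed.
Lemma le_join_l a b : lle a (join a b).
Proof. apply (meet_absorb Hb). Qed.
Lemma le_join_r a b : lle b (join a b).
Proof. rewrite (joinC Hb). apply le_join_l. Qed.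
Lemma le_lub a b c : lle a c -> lle b c -> lle (join a b) c.
Proof. rewrite !le_join_iff; intros H1 H2. rewrite <- (joinA Hb), H2, H1. reflexivity. Qed.
Lemma meet_mono a a' b b' : lle a a' -> lle b b' -> lle (meet a b) (meet a' b').
Proof. intros. apply le_glb; [eapply le_trans; [apply le_meet_l|]|eapply le_trans; [apply le_meet_r|]]; assumption. Qed.
Lemma join_mono a a' b b' : lle a a' -> lle b b' -> lle (join a b) (join a' b').
Proof. intros. apply le_lub; [eapply le_trans; [|apply le_join_l]|eapply le_trans; [|apply le_join_r]]; assumption. Qed.
Lemma le_z a : lle z a.
Proof. unfold lle. transitivity (meet z (join z a)).
  rewrite (joinC Hb), (join0 Hb). reflexivity. apply (meet_absorb Hb). Qed.
Lemma le_o a : lle a o.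
Proof. apply (meet1 Hb). Qed.
Lemma join_distr a b c : join a (meet b c) = meet (join a b) (join a c).
Proof.
  rewrite (meet_distr Hb (join a b) a c).
  rewrite (meetC Hb (join a b) a), (meet_absorb Hb).
  rewrite (meetC Hb (join a b) c), (meet_distr Hb c a b).
  rewrite (joinA Hb), (meetC Hb c a), (join_absorb Hb), (meetC Hb c b). reflexivity.
Qed.
Lemma meet_distr_r a b c : meet (join a b) c = join (meet a c) (meet b c).
Proof. rewrite (meetC Hb), (meet_distr Hb), (meetC Hb c a), (meetC Hb c b). reflexivity. Qed.
Lemma bdl_dual : bdl_axioms join meet o z.
Proof.
  constructor.
  - apply (joinC Hb). - apply (meetC Hb). - apply (joinA Hb). - apply (meetA Hb).
  - apply (join_absorb Hb). - apply (meet_absorb Hb). - apply join_distr.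
  - apply (meet1 Hb). - apply (join0 Hb).
Qed.

Lemma le_of_eq_meet a b c : a = meet b c -> lle a b.
Proof. intros ->. apply le_meet_l. Qed.
Lemma le_of_eq_join a b c : b = join a c -> lle a b.
Proof. intros ->. apply le_join_l. Qed.

Section PF.
Variable P : T -> Prop.
Hypothesis HP : pf P.
Lemma pf_o : P o. Proof using Hb HP. apply HP. Qed.
Lemma pf_z : ~ P z. Proof using Hb HP. apply HP. Qed.
Lemma pf_up a b : P a -> lle a b -> P b. Proof using Hb HP. apply HP. Qed.
Lemma pf_meet a b : P (meet a b) <-> P a /\ P b.
Proof. split. intro H; split; eapply pf_up; eauto using le_meet_l, le_meet_r.
  intros [H1 H2]; apply HP; auto. Qed.
Lemma pf_join a b : P (join a b) <-> P a \/ P b.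
Proof. split. apply HP. intros [H|H]; eapply pf_up; eauto using le_join_l, le_join_r. Qed.
End PF.

Lemma ext (r : T -> T -> Prop)
  (r_refl : forall x, r x x)
  (r_mono : forall x x' w, lle x' x -> r x w -> r x' w)
  (r_up : forall x w w', r x w -> lle w w' -> r x w')
  (r_meet : forall x w1 w2, r x w1 -> r x w2 -> r x (meet w1 w2))
  (r_trans : forall x w v, r x w -> r w v -> r x v)
  (r_join : forall x y w, r x w -> r y w -> r (join x y) w)
  a b : ~ r a b -> exists Q, pf Q /\ Q a /\ ~ Q b /\ (forall x y, Q x -> r x y -> Q y).
Proof.
  intro nab.
  set (Good' := fun S : T -> Prop => S a /\ (forall x y, S x -> S y -> S (meet x y)) /\
     (forall x y, S x -> lle x y -> S y) /\ ~ S b /\ (forall x y, S x -> r x y -> S y)).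
  set (Good := fun S : T -> Prop => (forall t, ~ S t) \/ Good' S).
  assert (Q0good : Good' (fun w => r a w)).
  { split; [|split; [|split; [|split]]]; eauto. }
  destruct (@zorn_sets _ Good) as [Q [GQ maxQ]].
  { intros F HF Hch.
    destruct (classic (exists t X, F X /\ X t)) as [[t [X0 [FX0 X0t]]]|Hne].
    2:{ left. intros t [X FX Xt]. apply Hne; eauto. }
    right.
    assert (Hg : forall X t, F X -> X t -> Good' X).
    { intros X t' FX Xt. destruct (HF X FX) as [E|G]; [exfalso; apply (E t' Xt)| exact G]. }
    split; [|split; [|split; [|split]]].
    - exists X0; auto. apply (Hg X0 t FX0 X0t).
    - intros x y [X FX Xx] [Y FY Yy]. destruct (Hch X Y FX FY) as [XY|YX].
      + exists Y; auto. apply (Hg Y y FY Yy); auto.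
      + exists X; auto. apply (Hg X x FX Xx); auto.
    - intros x y [X FX Xx] Hxy. exists X; auto.
      destruct (Hg X x FX Xx) as [_ [_ [Hu _]]]. eauto.
    - intros Hb1. destruct Hb1 as [X1 FX1 Xb1]. destruct (Hg X1 b FX1 Xb1) as [_ [_ [_ [Hn _]]]]. auto.
    - intros x y [X FX Xx] Hxy. exists X; auto.
      destruct (Hg X x FX Xx) as [_ [_ [_ [_ Hr]]]]. eauto. }
  assert (GQ' : Good' Q).
  { destruct GQ as [E|G]; [|exact G]. exfalso.
    apply (E a). apply (maxQ (fun w => r a w)); auto. intros t Qt; exfalso; apply (E t Qt).
    right; exact Q0good. }
  clear GQ. destruct GQ' as [Qa [Qmeet [Qup [Qnb Qr]]]].
  assert (key : forall x, ~ Q x -> exists q, Q q /\ r (meet q x) b).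
  { intros x nx. apply NNPP; intro Hno. apply nx.
    apply (maxQ (fun w => exists q, Q q /\ r (meet q x) w)).
    - intros t Qt. exists t. split; auto. apply r_mono with t; [apply le_meet_l | apply r_refl].
    - right. split; [|split; [|split; [|split]]].
      + exists a; split; auto. apply r_mono with a; [apply le_meet_l | apply r_refl].
      + intros y1 y2 [q1 [Q1 r1]] [q2 [Q2 r2]]. exists (meet q1 q2). split; auto.
        apply r_meet.
        * apply r_mono with (meet q1 x); auto. apply meet_mono; [apply le_meet_l|apply le_refl].
        * apply r_mono with (meet q2 x); auto. apply meet_mono; [apply le_meet_r|apply le_refl].
      + intros y1 y2 [q [Qq rq]] Hle. exists q; split; eauto.
      + intro Hb'. apply Hno; exact Hb'.
      + intros y1 y2 [q [Qq rq]] Hr. exists q; split; eauto.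
    - exists a. split; auto. apply r_mono with x; [apply le_meet_r|apply r_refl]. }
  exists Q. split; [|split; [exact Qa|split; [exact Qnb| exact Qr]]].
  split; [|split; [|split; [|split]]].
  - apply Qup with a; auto. apply le_o.
  - intro Hz. apply Qnb. apply Qup with z; auto. apply le_z.
  - exact Qmeet.
  - exact Qup.
  - intros x y Hxy. apply NNPP; intro Hn. apply not_or_and in Hn as [nx ny].
    destruct (key x nx) as [q1 [Q1 r1]]. destruct (key y ny) as [q2 [Q2 r2]].
    apply Qnb. apply Qr with (meet (meet q1 q2) (join x y)); [apply Qmeet; auto|].
    rewrite (meet_distr Hb). apply r_join.
    + apply r_mono with (meet q1 x); auto. apply meet_mono; [apply le_meet_l|apply le_refl].
    + apply r_mono with (meet q2 y); auto. apply meet_mono; [apply le_meet_r|apply le_refl].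
Qed.

Lemma pft a b : ~ lle a b -> exists P, pf P /\ P a /\ ~ P b.
Proof.
  intro H. destruct (ext lle) with (a := a) (b := b) as [Q [HQ [Qa [Qb _]]]]; auto.
  - apply le_refl.
  - intros; eapply le_trans; eauto.
  - intros; eapply le_trans; eauto.
  - intros; apply le_glb; auto.
  - intros; eapply le_trans; eauto.
  - intros; apply le_lub; auto.
  - exists Q; auto.
Qed.

Lemma sep_le a b : (forall P, pf P -> P a -> P b) -> lle a b.
Proof. intro H. apply NNPP; intro Hn. destruct (pft a b Hn) as [P [HP [Pa Pb]]]. exact (Pb (H P HP Pa)). Qed.

Lemma sep_eq a b : (forall P, pf P -> (P a <-> P b)) -> a = b.
Proof. intro H. apply le_antisym; apply sep_le; intros P HP; apply (H P HP). Qed.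

Definition avoid (P : T -> Prop) (L : list (T*T)) :=
  Forall (fun p => ~ (P (fst p) /\ ~ P (snd p))) L.

Lemma compact (K : T -> T -> Prop) :
  (forall L, Forall (fun p => K (fst p) (snd p)) L -> exists P, pf P /\ avoid P L) ->
  exists P, pf P /\ forall a c, K a c -> ~ (P a /\ ~ P c).
Proof.
  intro HK.
  set (Cons := fun S : bool * T -> Prop => forall f i L, S (true, f) -> S (false, i) ->
     Forall (fun p => K (fst p) (snd p)) L -> exists P, pf P /\ P f /\ ~ P i /\ avoid P L).
  set (Good' := fun S : bool * T -> Prop => S (true, o) /\ S (false, z) /\
     (forall x y, S (true, x) -> S (true, y) -> S (true, meet x y)) /\
     (forall x y, S (false, x) -> S (false, y) -> S (false, join x y)) /\ Cons S).
  set (Good := fun S : bool * T -> Prop => (forall t, ~ S t) \/ Good' S).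
  set (S0 := fun p : bool * T => if fst p then snd p = o else snd p = z).
  assert (G0 : Good' S0).
  { unfold Good', Cons, S0; split; [|split; [|split; [|split]]]; simpl; auto.
    - intros x y -> ->. apply meet_idem.
    - intros x y -> ->. apply join_idem.
    - intros f i L -> -> HL. destruct (HK L HL) as [P [HP Hav]]. exists P.
      split; auto. split; [apply (pf_o P HP)|split; [apply (pf_z P HP)|auto]]. }
  destruct (@zorn_sets _ Good) as [A [GA maxA]].
  { intros F HF Hch.
    destruct (classic (exists t X, F X /\ X t)) as [[t [X0 [FX0 X0t]]]|Hne].
    2:{ left. intros t [X FX Xt]. apply Hne; eauto. }
    right.
    assert (Hg : forall X t, F X -> X t -> Good' X).
    { intros X t' FX Xt. destruct (HF X FX) as [E|G]; [exfalso; apply (E t' Xt)| exact G]. }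
    split; [|split; [|split; [|split]]].
    - exists X0; auto. apply (Hg X0 t FX0 X0t).
    - exists X0; auto. apply (Hg X0 t FX0 X0t).
    - intros x y [X FX Xx] [Y FY Yy]. destruct (Hch X Y FX FY) as [XY|YX].
      + exists Y; auto. apply (Hg Y _ FY Yy); auto.
      + exists X; auto. apply (Hg X _ FX Xx); auto.
    - intros x y [X FX Xx] [Y FY Yy]. destruct (Hch X Y FX FY) as [XY|YX].
      + exists Y; auto. apply (Hg Y _ FY Yy); auto.
      + exists X; auto. apply (Hg X _ FX Xx); auto.
    - intros f i L [X FX Xx] [Y FY Yy] HL. destruct (Hch X Y FX FY) as [XY|YX].
      + apply (Hg Y _ FY Yy); auto.
      + apply (Hg X _ FX Xx); auto. }
  assert (GA' : Good' A).
  { destruct GA as [E|G]; [|exact G]. exfalso.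
    apply (E (true, o)). apply (maxA S0).
    - intros t At; exfalso; apply (E t At).
    - right; exact G0.
    - unfold S0; simpl; reflexivity. }
  clear GA. destruct GA' as [Ao [Az [Ameet [Ajoin ConsA]]]].
  assert (tot : forall x, A (true, x) \/ A (false, x)).
  { intros x. apply NNPP; intro Hn; apply not_or_and in Hn as [nF nI].
    set (F' := fun w => exists f, A (true, f) /\ lle (meet f x) w).
    set (I' := fun w => exists i, A (false, i) /\ lle w (join i x)).
    set (S1 := fun p : bool * T => if fst p then F' (snd p) else A (false, snd p)).
    set (S2 := fun p : bool * T => if fst p then A (true, snd p) else I' (snd p)).
    assert (AS1 : forall t, A t -> S1 t).
    { intros [[|] w] Aw; unfold S1; simpl; auto. exists w; split; auto. apply le_meet_l. }
    assert (AS2 : forall t, A t -> S2 t).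
    { intros [[|] w] Aw; unfold S2; simpl; auto. exists w; split; auto. apply le_join_l. }
    assert (HC : Cons S1 \/ Cons S2).
    { destruct (classic (exists f i L, F' f /\ A (false, i) /\
         Forall (fun p => K (fst p) (snd p)) L /\
         ~ exists P, pf P /\ P f /\ ~ P i /\ avoid P L))
        as [[w1 [i1 [L1 [[f1 [Af1 Hf1]] [Ai1 [KL1 No1]]]]]] | Hno].
      - right. intros f2 w2 L2 Af2 Hw2' KL2. unfold S2 in Af2, Hw2'. simpl in Af2, Hw2'.
        destruct Hw2' as [i2 [Ai2 Hw2]].
        destruct (ConsA (meet f1 f2) (join i1 i2) (L1 ++ L2) (Ameet _ _ Af1 Af2) (Ajoin _ _ Ai1 Ai2)
           (proj2 (Forall_app _ _ _) (conj KL1 KL2))) as [P [HP [Pf [Pi Pav]]]].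
        apply pf_meet in Pf as [Pf1 Pf2]; auto.
        rewrite (pf_join P HP) in Pi. unfold avoid in Pav. apply Forall_app in Pav as [Pav1 Pav2].
        destruct (classic (P x)) as [Px|nPx].
        + exfalso. apply No1. exists P. split; auto. split.
          * apply pf_up with (meet f1 x); auto. apply (pf_meet P HP); auto.
          * split; auto.
        + exists P. split; auto. split; auto. split; auto. intro Pw2.
          assert (P (join i2 x)) by (apply pf_up with w2; auto).
          apply (pf_join P HP) in H as [H|H]; auto.
      - left. intros f i L Hf Hi HL. unfold S1 in Hf, Hi; simpl in Hf, Hi. apply NNPP; intro Hn. apply Hno; exists f, i, L; auto. }
    destruct HC as [C1|C2].
    - apply nF. apply (maxA S1); auto.
      + right. unfold Good', S1; split; [|split; [|split; [|split]]]; simpl; auto.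
        * exists o; split; auto. apply le_meet_l.
        * intros y1 y2 [f1 [A1 H1]] [f2 [A2 H2]]. exists (meet f1 f2). split; auto.
          apply le_glb.
          -- eapply le_trans; [|exact H1]. apply meet_mono; [apply le_meet_l|apply le_refl].
          -- eapply le_trans; [|exact H2]. apply meet_mono; [apply le_meet_r|apply le_refl].
      + unfold S1; simpl. exists o; split; auto. apply le_meet_r.
    - apply nI. apply (maxA S2); auto.
      + right. unfold Good', S2; split; [|split; [|split; [|split]]]; simpl; auto.
        * exists z; split; auto. apply le_z.
        * intros y1 y2 [i1 [A1 H1]] [i2 [A2 H2]]. exists (join i1 i2). split; auto.
          apply le_lub.
          -- eapply le_trans; [exact H1|]. apply join_mono; [apply le_join_l|apply le_refl].
          -- eapply le_trans; [exact H2|]. apply join_mono; [apply le_join_r|apply le_refl].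
      + unfold S2; simpl. exists z; split; auto. apply le_join_r. }
  exists (fun x => A (true, x)). split.
  - split; [|split; [|split; [|split]]].
    + exact Ao.
    + intro Hz. destruct (ConsA z z nil) as [P [HP [Pz _]]]; auto. apply (pf_z P HP Pz).
    + exact Ameet.
    + intros x y Ax Hxy. destruct (tot y) as [Ay|Ay]; auto.
      destruct (ConsA x y nil) as [P [HP [Px [Py _]]]]; auto. exfalso; apply Py.
      apply pf_up with x; auto.
    + intros x y Hxy. destruct (tot x) as [Ax|Ax]; auto. destruct (tot y) as [Ay|Ay]; auto.
      destruct (ConsA (join x y) (join x y) nil) as [P [HP [P1 [P2 _]]]]; auto. contradiction.
  - intros a c Kac [Aa nAc]. destruct (tot c) as [Ac|Ac]; [contradiction|].
    destruct (ConsA a c ((a, c) :: nil)) as [P [HP [Pa [Pc Hav]]]]; auto.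
    inversion Hav; subst. apply H1; simpl; auto.
Qed.

End Lat.


Section W.
Variable A : WHB.
Hypothesis HA : whb_axioms A.
Local Notation mt := (wmeet A).
Local Notation jn := (wjoin A).
Local Notation im := (wimp A).
Local Notation ci := (wcoimp A).
Local Notation le := (lle A (wmeet A)).
Let Hb := whb_bdl HA.

Lemma prime_pf P : prime_filter P <-> pf A mt jn (w0 A) (w1 A) P.
Proof. reflexivity. Qed.

Lemma imp_le_one x y : le x y -> im x y = w1 A.
Proof. unfold lle; intro H. rewrite <- (whb_imp_refl HA x). rewrite <- H at 3.
  rewrite (whb_imp_meet HA), (whb_imp_refl HA), (meetC Hb), (meet1 Hb). reflexivity. Qed.
Lemma imp_mono x w w' : le w w' -> le (im x w) (im x w').
Proof. unfold lle; intro H. rewrite <- (whb_imp_meet HA), H. reflexivity. Qed.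
Lemma imp_anti x x' w : le x x' -> le (im x' w) (im x w).
Proof. intro H. apply (le_join_iff _ _ _ _ _ Hb) in H.
  apply (le_of_eq_meet _ _ _ _ _ Hb) with (im x' w).
  rewrite <- (whb_imp_join HA), H. reflexivity. Qed.
Lemma coimp_le_zero x y : le x y -> ci x y = w0 A.
Proof. unfold lle; intro H. rewrite <- (whb_coimp_refl HA x). rewrite <- H at 3.
  rewrite (whb_coimp_meet HA), (whb_coimp_refl HA), (joinC Hb), (join0 Hb). reflexivity. Qed.
Lemma coimp_mono1 x x' d : le x x' -> le (ci x d) (ci x' d).
Proof. intro H. apply (le_join_iff _ _ _ _ _ Hb) in H.
  apply (le_of_eq_join _ _ _ _ _ Hb) with (ci x' d).
  rewrite <- (whb_coimp_join HA), H. reflexivity. Qed.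
Lemma coimp_anti2 x d d' : le d d' -> le (ci x d') (ci x d).
Proof. unfold lle; intro H.
  apply (le_of_eq_join _ _ _ _ _ Hb) with (ci x d). rewrite (joinC Hb).
  rewrite <- (whb_coimp_meet HA), H. reflexivity. Qed.

Lemma R_lemma P a b : prime_filter P -> ~ P (im a b) ->
  exists Q, prime_filter Q /\ relR P Q /\ Q a /\ ~ Q b.
Proof.
  intros HP Hn.
  destruct (ext A mt jn (w0 A) (w1 A) Hb (fun x w => P (im x w))) with (a := a) (b := b)
    as [Q [HQ [Qa [Qb Qr]]]]; auto.
  - intro x. rewrite (whb_imp_refl HA). apply (pf_o _ _ _ _ _ Hb P HP).
  - intros x x' w Hx Hw. apply (pf_up _ _ _ _ _ Hb P HP) with (mt (im x' x) (im x w)).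
    + apply (pf_meet _ _ _ _ _ Hb P HP). split; auto. rewrite (imp_le_one _ _ Hx).
      apply (pf_o _ _ _ _ _ Hb P HP).
    + apply (whb_imp_trans HA).
  - intros x w w' Hw Hle. apply (pf_up _ _ _ _ _ Hb P HP) with (im x w); auto. apply imp_mono; auto.
  - intros x w1 w2 H1 H2. rewrite (whb_imp_meet HA). apply (pf_meet _ _ _ _ _ Hb P HP); auto.
  - intros x w v H1 H2. apply (pf_up _ _ _ _ _ Hb P HP) with (mt (im x w) (im w v)).
    + apply (pf_meet _ _ _ _ _ Hb P HP); auto.
    + apply (whb_imp_trans HA).
  - intros x y w H1 H2. rewrite (whb_imp_join HA). apply (pf_meet _ _ _ _ _ Hb P HP); auto.
  - exists Q. split; auto. split; auto. intros x y Hxy Qx. eauto.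
Qed.

Lemma dual_le x y : lle A jn x y <-> le y x.
Proof. unfold lle. rewrite (le_join_iff _ _ _ _ _ Hb y x), (joinC Hb). reflexivity. Qed.

Lemma dual_pf_compl J : pf A jn mt (w1 A) (w0 A) J -> prime_filter (fun x => ~ J x).
Proof.
  intros [J0 [J1 [Jm [Ju Jp]]]]. split; [|split; [|split; [|split]]].
  - exact J1.
  - intro H; apply H; exact J0.
  - intros x y nx ny Hm. destruct (Jp x y Hm); auto.
  - intros x y nx Hxy Jy. apply nx. apply (Ju y x Jy). apply dual_le. exact Hxy.
  - intros x y Hn. apply NNPP; intro H. apply not_or_and in H as [H1 H2].
    apply Hn. apply Jm; apply NNPP; auto.
Qed.

Lemma S_lemma P a b : prime_filter P -> P (ci a b) ->
  exists Q, prime_filter Q /\ relS P Q /\ Q a /\ ~ Q b.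
Proof.
  intros HP Hab.
  pose proof (bdl_dual _ _ _ _ _ Hb) as Hd.
  destruct (ext A jn mt (w1 A) (w0 A) Hd (fun x w => ~ P (ci w x))) with (a := b) (b := a)
    as [J [HJ [Jb [Ja Jr]]]]; auto.
  - intros x. rewrite (whb_coimp_refl HA). apply (pf_z _ _ _ _ _ Hb P HP).
  - intros x x' w Hx Hw Hp. apply Hw. apply (pf_up _ _ _ _ _ Hb P HP) with (ci w x'); auto.
    apply coimp_anti2. apply dual_le; exact Hx.
  - intros x w w' Hw Hle Hp. apply Hw. apply (pf_up _ _ _ _ _ Hb P HP) with (ci w' x); auto.
    apply coimp_mono1. apply dual_le; exact Hle.
  - intros x w1 w2 H1 H2 Hp. rewrite (whb_coimp_join HA) in Hp.
    apply (pf_join _ _ _ _ _ Hb P HP) in Hp as [Hp|Hp]; auto.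
  - intros x w v H1 H2 Hp.
    assert (Hq : P (jn (ci v w) (ci w x))).
    { apply (pf_up _ _ _ _ _ Hb P HP) with (ci v x); auto. apply (whb_coimp_trans HA). }
    apply (pf_join _ _ _ _ _ Hb P HP) in Hq as [Hq|Hq]; auto.
  - intros x y w H1 H2 Hp. rewrite (whb_coimp_meet HA) in Hp.
    apply (pf_join _ _ _ _ _ Hb P HP) in Hp as [Hp|Hp]; auto.
  - exists (fun x => ~ J x). split; [apply dual_pf_compl; exact HJ|]. split; [|split; auto].
    intros c d nJc nnJd. apply NNPP; intro Hn. apply nJc. apply (Jr d c); auto.
    apply NNPP; exact nnJd.
Qed.

Lemma RS (P Q : A -> Prop) : prime_filter P -> prime_filter Q -> (relS P Q <-> relR Q P).
Proof.
  intros HP HQ. split.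
  - intros HS a b Hab Pa. apply (pf_up _ _ _ _ _ Hb P HP) with (mt a (ci (im a b) (w0 A))).
    + apply (pf_meet _ _ _ _ _ Hb P HP). split; auto. apply HS; auto.
      apply (pf_z _ _ _ _ _ Hb Q HQ).
    + apply (whb_ax9 HA).
  - intros HR a b Qa nQb.
    assert (H : Q (jn b (im (w1 A) (ci a b)))).
    { apply (pf_up _ _ _ _ _ Hb Q HQ) with a; auto. apply (whb_ax10 HA). }
    apply (pf_join _ _ _ _ _ Hb Q HQ) in H as [H|H]; [contradiction|].
    apply (HR _ _ H). apply (pf_o _ _ _ _ _ Hb P HP).
Qed.

Lemma sigma_G P a c : prime_filter P ->
  (G_op (fun Q => ~ Q a \/ Q c) P <-> P (im a c)).
Proof.
  intro HP. split.
  - intro HG. apply NNPP; intro Hn. destruct (R_lemma P a c HP Hn) as [Q [HQ [HR [Qa nQc]]]].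
    destruct (HG Q HQ HR); contradiction.
  - intros H Q HQ HR. destruct (classic (Q a)) as [Qa|nQa]; [right; exact (HR a c H Qa) | left; exact nQa].
Qed.

Lemma sigma_H P a c : prime_filter P ->
  (H_op (fun Q => ~ Q a \/ Q c) P <-> ~ P (ci a c)).
Proof.
  intro HP. split.
  - intros HH Pac. destruct (S_lemma P a c HP Pac) as [Q [HQ [HS [Qa nQc]]]].
    destruct (HH Q HQ HS); contradiction.
  - intros nP Q HQ HS. destruct (classic (Q c)) as [Qc|nQc]; [right; exact Qc|].
    destruct (classic (Q a)) as [Qa|nQa]; [|left; exact nQa].
    exfalso; apply nP; apply HS; assumption.
Qed.

End W.


Fixpoint den {A : WHB} (L : list (A * A)) (P : A -> Prop) : Prop :=
  match L with [] => False | p :: L' => (P (fst p) /\ ~ P (snd p)) \/ den L' P end.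
Fixpoint cden {A : WHB} (L : list (A * A)) (P : A -> Prop) : Prop :=
  match L with [] => True | p :: L' => (~ P (fst p) \/ P (snd p)) /\ cden L' P end.
Definition normal {A : WHB} (U : pset A) : Prop := exists L : list (A * A), pseteq U (den L).
Definition dprod {A : WHB} (L M : list (A * A)) : list (A * A) :=
  flat_map (fun p => map (fun q => (wmeet A (fst p) (fst q), wjoin A (snd p) (snd q))) M) L.

Lemma cden_neg {A : WHB} (L : list (A * A)) P : den L P <-> ~ cden L P.
Proof. induction L as [|p L IH]; simpl. tauto. rewrite IH. destruct (classic (P (fst p))); tauto. Qed.

Lemma den_app {A : WHB} (L M : list (A * A)) P : den (L ++ M) P <-> den L P \/ den M P.
Proof. induction L as [|p L IH]; simpl. tauto. rewrite IH. tauto. Qed.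

Lemma pseteq_refl {A : WHB} (U : pset A) : pseteq U U.
Proof. intros P _; tauto. Qed.
Lemma pseteq_sym {A : WHB} (U V : pset A) : pseteq U V -> pseteq V U.
Proof. intros H P HP; symmetry; apply H; auto. Qed.
Lemma pseteq_trans {A : WHB} (U V W : pset A) : pseteq U V -> pseteq V W -> pseteq U W.
Proof. intros H1 H2 P HP. rewrite (H1 P HP). apply H2; auto. Qed.
Lemma normal_ext {A : WHB} (U V : pset A) : pseteq U V -> normal U -> normal V.
Proof. intros H [L HL]. exists L. eapply pseteq_trans; [apply pseteq_sym; exact H|exact HL]. Qed.

Section W3.
Variable A : WHB.
Hypothesis HA : whb_axioms A.
Local Notation mt := (wmeet A).
Local Notation jn := (wjoin A).
Local Notation im := (wimp A).
Local Notation ci := (wcoimp A).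
Let Hb := whb_bdl HA.

Lemma pr_meet P a b : prime_filter P -> (P (mt a b) <-> P a /\ P b).
Proof. intro HP. apply (pf_meet _ _ _ _ _ Hb P HP). Qed.
Lemma pr_join P a b : prime_filter P -> (P (jn a b) <-> P a \/ P b).
Proof. intro HP. apply (pf_join _ _ _ _ _ Hb P HP). Qed.
Lemma pr_1 P : prime_filter P -> P (w1 A).
Proof. intro HP. apply (pf_o _ _ _ _ _ Hb P HP). Qed.
Lemma pr_0 P : prime_filter P -> ~ P (w0 A).
Proof. intro HP. apply (pf_z _ _ _ _ _ Hb P HP). Qed.

Lemma den_map_prod (p : A * A) (M : list (A * A)) P : prime_filter P ->
  (den (map (fun q => (mt (fst p) (fst q), jn (snd p) (snd q))) M) P <->
               (P (fst p) /\ ~ P (snd p)) /\ den M P).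
Proof. intro HP. induction M as [|q M IHM]; simpl. tauto. rewrite IHM, pr_meet, pr_join by exact HP. tauto. Qed.

Lemma den_prod (L M : list (A * A)) P : prime_filter P ->
  (den (dprod L M) P <-> den L P /\ den M P).
Proof.
  intro HP. induction L as [|p L IH]; simpl. tauto.
  unfold dprod in *; simpl. rewrite den_app, IH, den_map_prod by exact HP. tauto.
Qed.

Lemma normal_den (L : list (A * A)) : normal (den L).
Proof. exists L. apply pseteq_refl. Qed.
Lemma normal_and (U V : pset A) : normal U -> normal V -> normal (fun P => U P /\ V P).
Proof. intros [L HL] [M HM]. exists (dprod L M). intros P HP. rewrite den_prod by exact HP.
  rewrite (HL P HP), (HM P HP). tauto. Qed.
Lemma normal_or (U V : pset A) : normal U -> normal V -> normal (fun P => U P \/ V P).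
Proof. intros [L HL] [M HM]. exists (L ++ M). intros P HP. rewrite den_app.
  rewrite (HL P HP), (HM P HP). tauto. Qed.
Lemma normal_true : normal (A := A) (fun _ => True).
Proof. exists [(w1 A, w0 A)]. intros P HP; simpl. pose proof (pr_1 P HP); pose proof (pr_0 P HP); tauto. Qed.
Lemma normal_false : normal (A := A) (fun _ => False).
Proof. exists []. intros P HP; simpl. tauto. Qed.
Lemma normal_cden (L : list (A * A)) : normal (cden L).
Proof.
  induction L as [|p L IH]; simpl. apply normal_true.
  apply normal_and; auto. exists [(w1 A, fst p); (snd p, w0 A)].
  intros P HP; simpl. pose proof (pr_1 P HP); pose proof (pr_0 P HP).
  destruct (classic (P (fst p))); tauto.
Qed.
Lemma normal_neg (U : pset A) : normal U -> normal (fun P => ~ U P).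
Proof. intros [L HL]. apply normal_ext with (cden L); [|apply normal_cden].
  intros P HP. rewrite (HL P HP), cden_neg. destruct (classic (cden L P)); tauto. Qed.
Lemma normal_sigma (a : A) : normal (fun P => P a).
Proof. exists [(a, w0 A)]. intros P HP; simpl. pose proof (pr_0 P HP); tauto. Qed.

Lemma G_op_ext (U V : pset A) : pseteq U V -> forall P, G_op U P <-> G_op V P.
Proof. intros H P. unfold G_op. split; intros HG Q HQ HR; apply (H Q HQ); auto. Qed.
Lemma H_op_ext (U V : pset A) : pseteq U V -> forall P, H_op U P <-> H_op V P.
Proof. intros H P. unfold H_op. split; intros HG Q HQ HR; apply (H Q HQ); auto. Qed.

Lemma G_cden (M : list (A * A)) P : prime_filter P ->
  (G_op (cden M) P <-> cden (map (fun p => (w1 A, im (fst p) (snd p))) M) P).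
Proof.
  intro HP. induction M as [|p M IH]; simpl.
  - unfold G_op; split; auto.
  - rewrite <- IH. rewrite <- (sigma_G A HA P (fst p) (snd p) HP).
    pose proof (pr_1 P HP). unfold G_op. split.
    + intro H1. split; [right|]; intros Q HQ HR; apply (H1 Q HQ HR).
    + intros [[H1|H1] H2] Q HQ HR; [contradiction|]. split; auto.
Qed.

Lemma H_cden (M : list (A * A)) P : prime_filter P ->
  (H_op (cden M) P <-> cden (map (fun p => (ci (fst p) (snd p), w0 A)) M) P).
Proof.
  intro HP. induction M as [|p M IH]; simpl.
  - unfold H_op; split; auto.
  - rewrite <- IH. pose proof (sigma_H A HA P (fst p) (snd p) HP) as HS.
    pose proof (pr_0 P HP). unfold H_op in *. split.
    + intro H1. split; [left; apply HS|]; intros Q HQ HR; apply (H1 Q HQ HR).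
    + intros [[H1|H1] H2] Q HQ HR; [|contradiction]. split; auto. apply HS; auto.
Qed.

Lemma normal_cnf (U : pset A) : normal U -> exists M, pseteq U (cden M).
Proof. intro HU. destruct (normal_neg U HU) as [M HM]. exists M. intros P HP.
  specialize (HM P HP). rewrite cden_neg in HM. destruct (classic (U P)); destruct (classic (cden M P)); tauto. Qed.

Lemma normal_G (U : pset A) : normal U -> normal (G_op U).
Proof.
  intro HU. destruct (normal_cnf U HU) as [M HM].
  apply normal_ext with (cden (map (fun p => (w1 A, im (fst p) (snd p))) M)); [|apply normal_cden].
  intros P HP. rewrite <- G_cden by exact HP. symmetry. apply G_op_ext. exact HM.
Qed.
Lemma normal_H (U : pset A) : normal U -> normal (H_op U).
Proof.
  intro HU. destruct (normal_cnf U HU) as [M HM].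
  apply normal_ext with (cden (map (fun p => (ci (fst p) (snd p), w0 A)) M)); [|apply normal_cden].
  intros P HP. rewrite <- H_cden by exact HP. symmetry. apply H_op_ext. exact HM.
Qed.
End W3.


Section W4.
Variable A : WHB.
Hypothesis HA : whb_axioms A.
Let Hb := whb_bdl HA.

Definition restr (U : pset A) := forall P, U P -> prime_filter P.
Definition TAc := { U : pset A | normal U /\ restr U }.

Definition tam (U V : TAc) : TAc.
Proof.
  refine (exist _ (fun P => proj1_sig U P /\ proj1_sig V P) _).
  destruct U as [u [nu ru]], V as [v [nv rv]]; simpl.
  split; [apply (normal_and A HA); auto | intros P [H _]; auto].
Defined.
Definition taj (U V : TAc) : TAc.
Proof.
  refine (exist _ (fun P => proj1_sig U P \/ proj1_sig V P) _).
  destruct U as [u [nu ru]], V as [v [nv rv]]; simpl.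
  split; [apply (normal_or A); auto | intros P [H|H]; auto].
Defined.
Definition tan (U : TAc) : TAc.
Proof.
  refine (exist _ (fun P => prime_filter P /\ ~ proj1_sig U P) _).
  destruct U as [u [nu ru]]; simpl.
  split; [|intros P [H _]; auto].
  apply normal_ext with (fun P => ~ u P); [|apply (normal_neg A HA); auto].
  intros P HP; tauto.
Defined.
Definition ta0 : TAc.
Proof.
  refine (exist _ (fun _ => False) _). split; [apply (normal_false A)| intros P []].
Defined.
Definition ta1 : TAc.
Proof.
  refine (exist _ (fun P => prime_filter P) _). split; [|intros P H; exact H].
  apply normal_ext with (fun _ => True); [|apply (normal_true A HA)]. intros P HP; tauto.
Defined.
Definition taG (U : TAc) : TAc.
Proof.
  refine (exist _ (fun P => prime_filter P /\ G_op (proj1_sig U) P) _).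
  destruct U as [u [nu ru]]; simpl.
  split; [|intros P [H _]; auto].
  apply normal_ext with (G_op u); [|apply (normal_G A HA); auto].
  intros P HP; tauto.
Defined.
Definition taH (U : TAc) : TAc.
Proof.
  refine (exist _ (fun P => prime_filter P /\ H_op (proj1_sig U) P) _).
  destruct U as [u [nu ru]]; simpl.
  split; [|intros P [H _]; auto].
  apply normal_ext with (H_op u); [|apply (normal_H A HA); auto].
  intros P HP; tauto.
Defined.
Definition sig' (a : A) : TAc.
Proof.
  refine (exist _ (fun P => prime_filter P /\ P a) _).
  split; [|intros P [H _]; auto].
  apply normal_ext with (fun P => P a); [|apply (normal_sigma A HA)]. intros P HP; tauto.
Defined.

Definition TA : TBA := @Build_TBA TAc tam taj tan ta0 ta1 taG taH.

Lemma TA_eq (U V : TAc) :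
  (forall P, prime_filter P -> (proj1_sig U P <-> proj1_sig V P)) -> U = V.
Proof.
  destruct U as [u pu], V as [v pv]; simpl. intro H.
  assert (e : u = v).
  { apply functional_extensionality; intro P. apply propositional_extensionality.
    split; intro HP.
    - apply H; auto. apply (proj2 pu); auto.
    - apply H; auto. apply (proj2 pv); auto. }
  subst v. f_equal. apply proof_irrelevance.
Qed.

Lemma restr_of (U : TAc) P : proj1_sig U P -> prime_filter P.
Proof. destruct U as [u [nu ru]]; simpl; auto. Qed.

Lemma tle_TA (U V : TA) :
  tle U V <-> (forall P, prime_filter P -> proj1_sig U P -> proj1_sig V P).
Proof.
  unfold tle. split.
  - intros H P HP HU. rewrite <- H in HU. simpl in HU. tauto.
  - intro H. apply TA_eq. intros P HP. simpl. split; [tauto|]. intro; split; auto.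
Qed.

Lemma TA_ax : tba_axioms TA.
Proof.
  split.
  - split; intros; apply TA_eq; intros P HP; simpl; tauto.
  - intro a. apply TA_eq; intros P HP; simpl; tauto.
  - intro a. apply TA_eq; intros P HP; simpl. destruct (classic (proj1_sig a P)); tauto.
  - intros x y. unfold tP. rewrite !tle_TA. simpl. split.
    + intros H P HP xP. split; auto. intros Q HQ HR. apply H; auto. split; auto.
      intros [_ HH]. destruct (HH P HP) as [_ nx]; auto.
      apply (RS A HA Q P HQ HP). exact HR.
    + intros H P HP [_ Hn]. apply NNPP; intro nyP. apply Hn; split; auto.
      intros Q HQ HS. split; auto. intro xQ. destruct (H Q HQ xQ) as [_ HG].
      apply nyP. apply HG; auto. apply (RS A HA P Q HP HQ). exact HS.
  - intros x y. unfold tF. rewrite !tle_TA. simpl. split.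
    + intros H P HP xP. split; auto. intros Q HQ HS. apply H; auto. split; auto.
      intros [_ HG]. destruct (HG P HP) as [_ nx]; auto.
      apply (RS A HA P Q HP HQ). exact HS.
    + intros H P HP [_ Hn]. apply NNPP; intro nyP. apply Hn; split; auto.
      intros Q HQ HR. split; auto. intro xQ. destruct (H Q HQ xQ) as [_ HH].
      apply nyP. apply HH; auto. apply (RS A HA Q P HQ HP). exact HR.
Qed.

End W4.


Definition K (C : TBA) : WHB :=
  @Build_WHB (tcar C) (tmeet C) (tjoin C)
    (fun a c => tG C (tjoin C (tneg C a) c))
    (fun a c => tneg C (tH C (tjoin C (tneg C a) c))) (t0 C) (t1 C).

Section KS.
Variable C : TBA.
Hypothesis HC : tba_axioms C.
Let Hb := tba_bdl HC.
Local Notation m := (tmeet C).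
Local Notation j := (tjoin C).
Local Notation n := (tneg C).
Local Notation G := (tG C).
Local Notation H := (tH C).
Local Notation le := (lle C (tmeet C)).
Local Notation cpf := (pf C (tmeet C) (tjoin C) (t0 C) (t1 C)).

Lemma cm P x y : cpf P -> (P (m x y) <-> P x /\ P y).
Proof. intro HP. apply (pf_meet _ _ _ _ _ Hb P HP). Qed.
Lemma cj P x y : cpf P -> (P (j x y) <-> P x \/ P y).
Proof. intro HP. apply (pf_join _ _ _ _ _ Hb P HP). Qed.
Lemma c0 P : cpf P -> (P (t0 C) <-> False).
Proof. intro HP. pose proof (pf_z _ _ _ _ _ Hb P HP). tauto. Qed.
Lemma c1 P : cpf P -> (P (t1 C) <-> True).
Proof. intro HP. pose proof (pf_o _ _ _ _ _ Hb P HP). tauto. Qed.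
Lemma cn P x : cpf P -> (P (n x) <-> ~ P x).
Proof.
  intro HP. split.
  - intros H1 H2. apply (pf_z _ _ _ _ _ Hb P HP). rewrite <- (tba_compl_meet HC x).
    apply (cm P x (n x) HP); auto.
  - intro H1. assert (H2 : P (j x (n x))) by (rewrite (tba_compl_join HC); apply (pf_o _ _ _ _ _ Hb P HP)).
    apply (cj P x (n x) HP) in H2. tauto.
Qed.

Ltac memb P HP := repeat (first [rewrite (cm P _ _ HP) | rewrite (cj P _ _ HP) | rewrite (cn P _ HP) | rewrite (c0 P HP) | rewrite (c1 P HP)]).
Ltac beq := apply (sep_eq _ _ _ _ _ Hb); let P := fresh "P" in let HP := fresh "HP" in
  intros P HP; memb P HP.
Ltac ble := apply (sep_le _ _ _ _ _ Hb); let P := fresh "P" in let HP := fresh "HP" in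
  intros P HP; memb P HP.

Lemma PG_le x : le (tP (G x)) x.
Proof. apply (tba_PG HC). apply (le_refl _ _ _ _ _ Hb). Qed.
Lemma le_GP x : le x (G (tP x)).
Proof. apply (tba_PG HC). apply (le_refl _ _ _ _ _ Hb). Qed.
Lemma G_mono x y : le x y -> le (G x) (G y).
Proof. intro h. apply (tba_PG HC). eapply (le_trans _ _ _ _ _ Hb); [apply PG_le|exact h]. Qed.
Lemma G_meet x y : G (m x y) = m (G x) (G y).
Proof.
  apply (le_antisym _ _ _ _ _ Hb).
  - apply (le_glb _ _ _ _ _ Hb); apply G_mono; [apply (le_meet_l _ _ _ _ _ Hb)|apply (le_meet_r _ _ _ _ _ Hb)].
  - apply (tba_PG HC). apply (le_glb _ _ _ _ _ Hb); apply (tba_PG HC);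
      [apply (le_meet_l _ _ _ _ _ Hb)|apply (le_meet_r _ _ _ _ _ Hb)].
Qed.
Lemma G_top : G (t1 C) = t1 C.
Proof. apply (le_antisym _ _ _ _ _ Hb). apply (le_o _ _ _ _ _ Hb). apply (tba_PG HC). apply (le_o _ _ _ _ _ Hb). Qed.

Lemma FH_le x : le (tF (H x)) x.
Proof. apply (tba_FH HC). apply (le_refl _ _ _ _ _ Hb). Qed.
Lemma H_mono x y : le x y -> le (H x) (H y).
Proof. intro h. apply (tba_FH HC). eapply (le_trans _ _ _ _ _ Hb); [apply FH_le|exact h]. Qed.
Lemma H_meet x y : H (m x y) = m (H x) (H y).
Proof.
  apply (le_antisym _ _ _ _ _ Hb).
  - apply (le_glb _ _ _ _ _ Hb); apply H_mono; [apply (le_meet_l _ _ _ _ _ Hb)|apply (le_meet_r _ _ _ _ _ Hb)].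
  - apply (tba_FH HC). apply (le_glb _ _ _ _ _ Hb); apply (tba_FH HC);
      [apply (le_meet_l _ _ _ _ _ Hb)|apply (le_meet_r _ _ _ _ _ Hb)].
Qed.
Lemma H_top : H (t1 C) = t1 C.
Proof. apply (le_antisym _ _ _ _ _ Hb). apply (le_o _ _ _ _ _ Hb). apply (tba_FH HC). apply (le_o _ _ _ _ _ Hb). Qed.

Lemma K_ax : whb_axioms (K C).
Proof.
  split; simpl.
  - exact Hb.
  - intro a. replace (j (n a) a) with (t1 C) by (beq; destruct (classic (P a)); tauto).
    apply G_top.
  - intros a b c. rewrite <- G_meet. f_equal. beq; tauto.
  - intros a b c. rewrite <- G_meet. f_equal. beq; tauto.
  - intros a b c. unfold wle; simpl. fold (lle C (tmeet C) (m (G (j (n a) b)) (G (j (n b) c))) (G (j (n a) c))).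
    rewrite <- G_meet. apply G_mono. ble. destruct (classic (P b)); tauto.
  - intro a. replace (j (n a) a) with (t1 C) by (beq; destruct (classic (P a)); tauto).
    rewrite H_top. beq; tauto.
  - intros a b c. replace (j (n (j a b)) c) with (m (j (n a) c) (j (n b) c)) by (beq; tauto).
    rewrite H_meet. beq; tauto.
  - intros a b c. replace (j (n a) (m b c)) with (m (j (n a) b) (j (n a) c)) by (beq; tauto).
    rewrite H_meet. beq; tauto.
  - intros a b c. unfold wle; simpl.
    fold (lle C (tmeet C) (n (H (j (n a) c))) (j (n (H (j (n a) b))) (n (H (j (n b) c))))).
    assert (h : le (m (H (j (n a) b)) (H (j (n b) c))) (H (j (n a) c))).
    { rewrite <- H_meet. apply H_mono. ble. destruct (classic (P b)); tauto. }
    ble. intro nz. apply NNPP; intro hn. apply nz.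
    apply (pf_up _ _ _ _ _ Hb P HP) with (m (H (j (n a) b)) (H (j (n b) c))); auto.
    memb P HP. tauto.
  - intros a b. unfold wle; simpl. rewrite (join0 Hb).
    fold (lle C (tmeet C) (m a (tP (G (j (n a) b)))) b).
    eapply (le_trans _ _ _ _ _ Hb).
    + apply (meet_mono _ _ _ _ _ Hb); [apply (le_refl _ _ _ _ _ Hb)|apply PG_le].
    + ble. tauto.
  - intros a b. unfold wle; simpl.
    replace (j (n (t1 C)) (n (H (j (n a) b)))) with (tP (m a (n b))).
    2:{ unfold tP. f_equal. replace (n (m a (n b))) with (j (n a) b) by (beq; tauto).
        beq; tauto. }
    fold (lle C (tmeet C) a (j b (G (tP (m a (n b)))))).
    eapply (le_trans _ _ _ _ _ Hb) with (j b (m a (n b))).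
    + ble. destruct (classic (P b)); tauto.
    + apply (join_mono _ _ _ _ _ Hb); [apply (le_refl _ _ _ _ _ Hb)|apply le_GP].
Qed.

End KS.


Lemma tba_hom_K (C D : TBA) (k : C -> D) : tba_hom k -> whb_hom (A := K C) (B := K D) k.
Proof.
  intros [hm [hj [hn [h0 [h1 [hG hH]]]]]].
  split; [|split; [|split; [|split; [|split]]]]; simpl; auto.
  - intros a b. rewrite hG, hj, hn. reflexivity.
  - intros a b. rewrite hn, hH, hj, hn. reflexivity.
Qed.

Lemma whb_hom_comp (A B C : WHB) (f : A -> B) (g : B -> C) :
  whb_hom f -> whb_hom g -> whb_hom (fun a => g (f a)).
Proof.
  intros [fm [fj [fi [fc [f0 f1]]]]] [gm [gj [gi [gc [g0 g1]]]]].
  split; [|split; [|split; [|split; [|split]]]]; intros; simpl;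
  rewrite ?fm, ?fj, ?fi, ?fc, ?f0, ?f1, ?gm, ?gj, ?gi, ?gc, ?g0, ?g1; reflexivity.
Qed.

Lemma tba_hom_comp (A B C : TBA) (f : A -> B) (g : B -> C) :
  tba_hom f -> tba_hom g -> tba_hom (fun a => g (f a)).
Proof.
  intros [fm [fj [fn [f0 [f1 [fG fH]]]]]] [gm [gj [gn [g0 [g1 [gG gH]]]]]].
  split; [|split; [|split; [|split; [|split; [|split]]]]]; intros; simpl;
  rewrite ?fm, ?fj, ?fn, ?f0, ?f1, ?fG, ?fH, ?gm, ?gj, ?gn, ?g0, ?g1, ?gG, ?gH; reflexivity.
Qed.

Lemma tba_hom_id (A : TBA) : tba_hom (fun a : A => a).
Proof. repeat split. Qed.

Lemma pullback_prime (A B : WHB) (g : A -> B) : whb_axioms A ->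
  whb_hom g -> forall Q : B -> Prop, prime_filter Q -> prime_filter (fun a => Q (g a)).
Proof.
  intros HA [gm [gj [gi [gc [g0 g1]]]]] Q [Q1 [Q0 [Qm [Qu Qp]]]].
  split; [|split; [|split; [|split]]].
  - rewrite g1; exact Q1.
  - rewrite g0; exact Q0.
  - intros a b Ha Hb'. rewrite gm. auto.
  - intros a b Ha Hab. apply (Qu (g a)); auto. unfold wle in *. rewrite <- gm, Hab. reflexivity.
  - intros a b H. rewrite gj in H. auto.
Qed.

Fixpoint DE {A : WHB} {C : TBA} (h : A -> C) (L : list (A * A)) : C :=
  match L with
  | [] => t0 C
  | p :: L' => tjoin C (tmeet C (h (fst p)) (tneg C (h (snd p)))) (DE h L')
  end.

Lemma memb_DE (A : WHB) (C : TBA) (HC : tba_axioms C) (h : A -> C) L V :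
  pf C (tmeet C) (tjoin C) (t0 C) (t1 C) V -> (V (DE h L) <-> den L (fun a => V (h a))).
Proof.
  intro HV. induction L as [|p L IH]; simpl.
  - rewrite (c0 C HC V HV). tauto.
  - rewrite (cj C HC V _ _ HV), (cm C HC V _ _ HV), (cn C HC V _ HV), IH. tauto.
Qed.

Lemma DE_hom (A : WHB) (C D : TBA) (h : A -> C) (k : C -> D) L :
  tba_hom k -> k (DE h L) = DE (fun a => k (h a)) L.
Proof.
  intros [km [kj [kn [k0 _]]]]. induction L as [|p L IH]; simpl; auto.
  rewrite kj, km, kn, IH. reflexivity.
Qed.

Lemma DE_map (A B : WHB) (C : TBA) (g : A -> B) (h : B -> C) L :
  DE (fun a => h (g a)) L = DE h (map (fun p => (g (fst p), g (snd p))) L).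
Proof. induction L as [|p L IH]; simpl; auto. rewrite IH; reflexivity. Qed.

Lemma den_map (A B : WHB) (g : A -> B) L Q :
  den L (fun a => Q (g a)) <-> den (map (fun p => (g (fst p), g (snd p))) L) Q.
Proof. induction L as [|p L IH]; simpl. tauto. rewrite IH. tauto. Qed.

Section W6.
Variable A : WHB.
Hypothesis HA : whb_axioms A.
Local Notation TAA := (TA A HA).

Lemma sig_hom : whb_hom (A := A) (B := K TAA) (sig' A HA).
Proof.
  split; [|split; [|split; [|split; [|split]]]].
  - intros a b. apply TA_eq. intros P HP. simpl. rewrite (pr_meet A HA P a b HP). tauto.
  - intros a b. apply TA_eq. intros P HP. simpl. rewrite (pr_join A HA P a b HP). tauto.
  - intros a b. apply TA_eq. intros P HP. simpl.
    rewrite (G_op_ext A (fun Q : A -> Prop => (prime_filter Q /\ ~ (prime_filter Q /\ Q a)) \/ (prime_filter Q /\ Q b))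
               (fun Q : A -> Prop => ~ Q a \/ Q b)).
    + rewrite (sigma_G A HA P a b HP). tauto.
    + intros Q HQ. tauto.
  - intros a b. apply TA_eq. intros P HP. simpl.
    rewrite (H_op_ext A (fun Q : A -> Prop => (prime_filter Q /\ ~ (prime_filter Q /\ Q a)) \/ (prime_filter Q /\ Q b))
               (fun Q : A -> Prop => ~ Q a \/ Q b)).
    + rewrite (sigma_H A HA P a b HP). tauto.
    + intros Q HQ. tauto.
  - apply TA_eq. intros P HP. simpl. pose proof (pr_0 A HA P HP). tauto.
  - apply TA_eq. intros P HP. simpl. pose proof (pr_1 A HA P HP). tauto.
Qed.

Lemma th_DE (C : TBA) (th : C -> TAA) (h : A -> C) L P :
  tba_hom th -> (forall a, th (h a) = sig' A HA a) -> prime_filter P ->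
  (proj1_sig (th (DE h L)) P <-> den L P).
Proof.
  intros [tm [tj [tn [t0' _]]]] Hh HP. induction L as [|p L IH]; simpl.
  - rewrite t0'. simpl. tauto.
  - rewrite tj, tm, tn, !Hh. simpl. rewrite IH. tauto.
Qed.

Definition ameet (l : list (bool * A)) : A :=
  fold_right (fun (p : bool * A) (r : A) => if fst p then wmeet A (snd p) r else r) (w1 A) l.
Definition cjoin (l : list (bool * A)) : A :=
  fold_right (fun (p : bool * A) (r : A) => if fst p then r else wjoin A (snd p) r) (w0 A) l.

Lemma basic_iff l Q : prime_filter Q ->
  (Forall (fun p => subbasic p Q) l <-> Q (ameet l) /\ ~ Q (cjoin l)).
Proof.
  intro HQ. induction l as [|[[|] x] l IH]; simpl.
  - split; [intros _; split; [apply (pr_1 A HA Q HQ)|apply (pr_0 A HA Q HQ)]|intros _; constructor].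
  - rewrite Forall_cons_iff, IH, (pr_meet A HA Q _ _ HQ). unfold subbasic; simpl. tauto.
  - rewrite Forall_cons_iff, IH, (pr_join A HA Q _ _ HQ). unfold subbasic; simpl. tauto.
Qed.

Lemma den_ex (L : list (A * A)) P : den L P -> exists p, In p L /\ P (fst p) /\ ~ P (snd p).
Proof. induction L as [|p L IH]; simpl; [tauto|]. intros [H|H]; [exists p; auto|].
  destruct (IH H) as [q [Hq Hq']]; exists q; auto. Qed.
Lemma den_in (L : list (A * A)) P p : In p L -> P (fst p) -> ~ P (snd p) -> den L P.
Proof. induction L as [|q L IH]; simpl; [tauto|]. intros [<-|H] H1 H2; auto. Qed.

Lemma normal_open (U : pset A) : normal U -> t_open U.
Proof.
  intros [L HL] P HP HU. apply (HL P HP) in HU. destruct (den_ex L P HU) as [[a c] [Hin [Ha Hc]]].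
  exists [(true, a); (false, c)]. split.
  - repeat constructor; auto.
  - intros Q HQ Hf. apply (HL Q HQ). inversion Hf as [|? ? H1 Hf']; subst.
    inversion Hf' as [|? ? H2 _]; subst. eapply den_in; eauto.
Qed.

Lemma normal_clopen (U : pset A) : normal U -> clopen U.
Proof. intro HU. split; apply normal_open; auto. apply (normal_neg A HA); auto. Qed.

Lemma not_avoid_den (L : list (A * A)) P :
  ~ avoid A P L -> den L P.
Proof. unfold avoid. induction L as [|p L IH]; simpl; intro H.
  - apply H; constructor.
  - destruct (classic (P (fst p) /\ ~ P (snd p))) as [h|h]; [left; auto|right].
    apply IH. intro Hf. apply H. constructor; auto. Qed.

Lemma clopen_normal (U : pset A) : clopen U -> exists L, pseteq U (den L).
Proof.
  intros [Ho Hc].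
  set (Kp := fun a c : A => (forall Q, prime_filter Q -> Q a -> ~ Q c -> U Q) \/
                            (forall Q, prime_filter Q -> Q a -> ~ Q c -> ~ U Q)).
  assert (cover : forall P, prime_filter P -> exists a c, Kp a c /\ P a /\ ~ P c).
  { intros P HP. destruct (classic (U P)) as [HU|HU].
    - destruct (Ho P HP HU) as [l [Hl Hl']]. exists (ameet l), (cjoin l).
      apply (basic_iff l P HP) in Hl. split; [|exact Hl]. left. intros Q HQ Qa Qc.
      apply Hl'; auto. apply (basic_iff l Q HQ); auto.
    - destruct (Hc P HP HU) as [l [Hl Hl']]. exists (ameet l), (cjoin l).
      apply (basic_iff l P HP) in Hl. split; [|exact Hl]. right. intros Q HQ Qa Qc.
      apply Hl'; auto. apply (basic_iff l Q HQ); auto. }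
  assert (HL : exists L, Forall (fun p => Kp (fst p) (snd p)) L /\ forall P, prime_filter P -> den L P).
  { apply NNPP; intro Hn.
    destruct (compact A (wmeet A) (wjoin A) (w0 A) (w1 A) (whb_bdl HA) Kp) as [P [HP HPK]].
    - intros L HLK. apply NNPP; intro Hn2. apply Hn. exists L. split; auto.
      intros P HP. apply not_avoid_den. intro Hav. apply Hn2. exists P; auto.
    - destruct (cover P HP) as [a [c [Kac [Pa Pc]]]]. apply (HPK a c Kac); auto. }
  destruct HL as [L [HLK HLc]].
  assert (filt : forall L, Forall (fun p => Kp (fst p) (snd p)) L -> exists L',
    (forall P, prime_filter P -> den L' P -> U P) /\ (forall P, prime_filter P -> den L P -> U P -> den L' P)).
  { clear HLK HLc L. intros L HLK. induction L as [|[a c] L IH]; simpl.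
    - exists []. simpl. split; intros; contradiction.
    - inversion HLK as [|? ? Hk HLK']; subst. destruct (IH HLK') as [L' [H1 H2]].
      destruct Hk as [Hk|Hk]; simpl in Hk.
      + exists ((a, c) :: L'). simpl. split.
        * intros P HP [[Pa Pc]|HD]; auto.
        * intros P HP [D|D] HU; auto.
      + exists L'. split; auto. intros P HP [[Pa Pc]|D] HU; auto. exfalso; apply (Hk P HP Pa Pc HU). }
  destruct (filt L HLK) as [L' [H1 H2]]. exists L'. intros P HP. split; auto.
Qed.

End W6.


Section Main.
Variables (FW : Type -> WHB) (iW : forall X : Type, X -> FW X)
  (HW : forall X : Type, is_free_whb (iW X))
  (FT : Type -> TBA) (iT : forall X : Type, X -> FT X)
  (HT : forall X : Type, is_free_tba (iT X)).

Definition WA X : whb_axioms (FW X) := proj1 (HW X).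
Definition TX X : tba_axioms (FT X) := proj1 (HT X).

Definition th_sig X := constructive_indefinite_description _
  (proj1 (proj2 (HT X) (TA (FW X) (WA X)) (TA_ax _ _) (fun x => sig' _ (WA X) (iW X x)))).
Definition th X : FT X -> TAc (FW X) := proj1_sig (th_sig X).
Lemma th_hom X : tba_hom (A := FT X) (B := TA (FW X) (WA X)) (th X).
Proof. exact (proj1 (proj2_sig (th_sig X))). Qed.
Lemma th_gen X x : th X (iT X x) = sig' _ (WA X) (iW X x).
Proof. exact (proj2 (proj2_sig (th_sig X)) x). Qed.

Definition hh_sig X := constructive_indefinite_description _
  (proj1 (proj2 (HW X) (K (FT X)) (K_ax _ (TX X)) (iT X))).
Definition hh X : FW X -> FT X := proj1_sig (hh_sig X).
Lemma hh_hom X : whb_hom (A := FW X) (B := K (FT X)) (hh X).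
Proof. exact (proj1 (proj2_sig (hh_sig X))). Qed.
Lemma hh_gen X x : hh X (iW X x) = iT X x.
Proof. exact (proj2 (proj2_sig (hh_sig X)) x). Qed.

Lemma th_hh X a : th X (hh X a) = sig' _ (WA X) a.
Proof.
  refine (proj2 (proj2 (HW X) (K (TA (FW X) (WA X))) (K_ax _ (TA_ax _ _))
    (fun x => sig' _ (WA X) (iW X x))) (fun a => th X (hh X a)) (sig' _ (WA X)) _ _ _ _ a).
  - apply (whb_hom_comp (FW X) (K (FT X)) (K (TA (FW X) (WA X))) (hh X) (th X)); [apply hh_hom|].
    apply tba_hom_K. apply th_hom.
  - apply sig_hom.
  - intro x. rewrite hh_gen. apply th_gen.
  - intro x. reflexivity.
Qed.

Section Fix.
Variable X : Type.
Local Notation A := (FW X).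
Local Notation C := (FT X).
Local Notation HA := (WA X).
Local Notation HC := (TX X).
Local Notation cpf := (pf C (tmeet C) (tjoin C) (t0 C) (t1 C)).
Local Notation h := (hh X).
Let Hb := tba_bdl HC.

Definition pb (V : C -> Prop) : A -> Prop := fun a => V (h a).
Lemma pb_prime V : cpf V -> prime_filter (pb V).
Proof. intro HV. apply (pullback_prime A (K C) h HA (hh_hom X) V HV). Qed.

Definition Lof (U : TAc A) : list (A * A) :=
  proj1_sig (constructive_indefinite_description _ (proj1 (proj2_sig U))).
Lemma Lof_spec U : pseteq (proj1_sig U) (den (Lof U)).
Proof. exact (proj2_sig (constructive_indefinite_description _ (proj1 (proj2_sig U)))). Qed.

Definition psi (U : TAc A) : C := DE h (Lof U).
Lemma psi_memb U V : cpf V -> (V (psi U) <-> proj1_sig U (pb V)).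
Proof.
  intro HV. unfold psi. rewrite (memb_DE A C HC h _ V HV).
  symmetry. apply (Lof_spec U (pb V) (pb_prime V HV)).
Qed.

Fixpoint CE (M : list (A * A)) : C :=
  match M with [] => t1 C | p :: M' => tmeet C (tjoin C (tneg C (h (fst p))) (h (snd p))) (CE M') end.
Lemma memb_CE M V : cpf V -> (V (CE M) <-> cden M (pb V)).
Proof.
  intro HV. induction M as [|p M IH]; simpl.
  - rewrite (c1 C HC V HV). tauto.
  - rewrite (cm C HC V _ _ HV), (cj C HC V _ _ HV), (cn C HC V _ HV), IH. unfold pb. tauto.
Qed.
Lemma memb_GCE M V : cpf V -> (V (tG C (CE M)) <->
   cden (map (fun p => (w1 A, wimp A (fst p) (snd p))) M) (pb V)).
Proof.
  intro HV. pose proof (pr_1 A HA _ (pb_prime V HV)) as H1.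
  destruct (hh_hom X) as [_ [_ [hi _]]].
  induction M as [|p M IH]; simpl.
  - rewrite (G_top C HC), (c1 C HC V HV). tauto.
  - rewrite (G_meet C HC), (cm C HC V _ _ HV), IH. unfold pb at 2 3. rewrite hi. simpl. tauto.
Qed.
Lemma memb_HCE M V : cpf V -> (V (tH C (CE M)) <->
   cden (map (fun p => (wcoimp A (fst p) (snd p), w0 A)) M) (pb V)).
Proof.
  intro HV. pose proof (pr_0 A HA _ (pb_prime V HV)) as H0.
  destruct (hh_hom X) as [_ [_ [_ [hc _]]]].
  induction M as [|p M IH]; simpl.
  - rewrite (H_top C HC), (c1 C HC V HV). tauto.
  - rewrite (H_meet C HC), (cm C HC V _ _ HV), IH. unfold pb at 2 3. rewrite hc. simpl.
    rewrite (cn C HC V _ HV). tauto.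
Qed.

Lemma psi_CE U M : pseteq (proj1_sig U) (cden M) -> psi U = CE M.
Proof.
  intro HM. apply (sep_eq _ _ _ _ _ Hb). intros V HV.
  rewrite psi_memb, memb_CE by exact HV. apply HM. apply pb_prime; auto.
Qed.

Lemma psi_hom : tba_hom (A := TA A HA) (B := C) psi.
Proof.
  split; [|split; [|split; [|split; [|split; [|split]]]]].
  - intros U W. apply (sep_eq _ _ _ _ _ Hb). intros V HV.
    rewrite (cm C HC V _ _ HV), !psi_memb by exact HV. simpl. tauto.
  - intros U W. apply (sep_eq _ _ _ _ _ Hb). intros V HV.
    rewrite (cj C HC V _ _ HV), !psi_memb by exact HV. simpl. tauto.
  - intros U. apply (sep_eq _ _ _ _ _ Hb). intros V HV.
    rewrite (cn C HC V _ HV), !psi_memb by exact HV. simpl. pose proof (pb_prime V HV). tauto.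
  - apply (sep_eq _ _ _ _ _ Hb). intros V HV.
    rewrite (c0 C HC V HV), !psi_memb by exact HV. simpl. tauto.
  - apply (sep_eq _ _ _ _ _ Hb). intros V HV.
    rewrite (c1 C HC V HV), !psi_memb by exact HV. simpl. pose proof (pb_prime V HV). tauto.
  - intros U. destruct (normal_cnf A HA (proj1_sig U) (proj1 (proj2_sig U))) as [M HM].
    rewrite (psi_CE U M HM). apply (sep_eq _ _ _ _ _ Hb). intros V HV.
    rewrite psi_memb, memb_GCE by exact HV. simpl.
    pose proof (pb_prime V HV) as HP.
    rewrite <- (G_cden A HA M (pb V) HP). rewrite (G_op_ext A _ _ HM). tauto.
  - intros U. destruct (normal_cnf A HA (proj1_sig U) (proj1 (proj2_sig U))) as [M HM].
    rewrite (psi_CE U M HM). apply (sep_eq _ _ _ _ _ Hb). intros V HV.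
    rewrite psi_memb, memb_HCE by exact HV. simpl.
    pose proof (pb_prime V HV) as HP.
    rewrite <- (H_cden A HA M (pb V) HP). rewrite (H_op_ext A _ _ HM). tauto.
Qed.

Lemma psi_sig a : psi (sig' A HA a) = h a.
Proof.
  apply (sep_eq _ _ _ _ _ Hb). intros V HV. rewrite psi_memb by exact HV. simpl.
  pose proof (pb_prime V HV). unfold pb. tauto.
Qed.

Lemma psi_th b : psi (th X b) = b.
Proof.
  refine (proj2 (proj2 (HT X) C HC (iT X)) (fun b => psi (th X b)) (fun b => b) _ _ _ _ b).
  - apply (tba_hom_comp C (TA A HA) C (th X) psi); [apply th_hom|apply psi_hom].
  - apply tba_hom_id.
  - intro x. rewrite th_gen, psi_sig. apply hh_gen.
  - intro x. reflexivity.
Qed.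

Lemma th_inj b c : pseteq (proj1_sig (th X b)) (proj1_sig (th X c)) -> b = c.
Proof.
  intro H. rewrite <- (psi_th b), <- (psi_th c). f_equal. apply TA_eq. exact H.
Qed.

Lemma th_DE' L P : prime_filter P -> (proj1_sig (th X (DE h L)) P <-> den L P).
Proof. intro HP. apply (th_DE A HA C (th X) h L P (th_hom X) (th_hh X) HP). Qed.

Lemma b_DE b : exists L, b = DE h L.
Proof.
  destruct (proj1 (proj2_sig (th X b))) as [L HL]. exists L. apply th_inj.
  intros P HP. rewrite (HL P HP). symmetry. apply th_DE'; auto.
Qed.

End Fix.

Lemma main_result : exists theta : forall X : Type, FT X -> pset (FW X),
    (forall X : Type, iso_onto_T (theta X)) /\
    (forall (X Y : Type) (l : X -> Y) (g : FW X -> FW Y) (k : FT X -> FT Y),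
       whb_hom g -> (forall x, g (iW X x) = iW Y (l x)) ->
       tba_hom k -> (forall x, k (iT X x) = iT Y (l x)) ->
       forall b : FT X, pseteq (T_map g (theta X b)) (theta Y (k b))).
Proof.
  exists (fun X b => proj1_sig (th X b)). split.
  - intro X. destruct (th_hom X) as [tm [tj [tn [t0' [t1' [tG' tH']]]]]].
    split; [|split; [|split; [|split; [|split; [|split; [|split; [|split; [|split]]]]]]]].
    + intro b. apply (normal_clopen _ (WA X)). exact (proj1 (proj2_sig (th X b))).
    + intros b c. rewrite tm. simpl. apply pseteq_refl.
    + intros b c. rewrite tj. simpl. apply pseteq_refl.
    + intros b. rewrite tn. intros P HP. simpl. tauto.
    + rewrite t0'. apply pseteq_refl.
    + rewrite t1'. intros P HP. simpl. tauto.
    + intros b. rewrite tG'. intros P HP. simpl. tauto.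
    + intros b. rewrite tH'. intros P HP. simpl. tauto.
    + intros b c H. apply th_inj; exact H.
    + intros U HU. destruct (clopen_normal _ (WA X) U HU) as [L HL].
      exists (DE (hh X) L). intros P HP. rewrite (th_DE' X L P HP). symmetry. apply HL; auto.
  - intros X Y l g k Hg Hgl Hk Hkl b.
    destruct (b_DE X b) as [L ->].
    assert (Hkh : forall a, k (hh X a) = hh Y (g a)).
    { intro a.
      refine (proj2 (proj2 (HW X) (K (FT Y)) (K_ax _ (TX Y)) (fun x => iT Y (l x)))
        (fun a => k (hh X a)) (fun a => hh Y (g a)) _ _ _ _ a).
      - apply (whb_hom_comp (FW X) (K (FT X)) (K (FT Y)) (hh X) k); [apply hh_hom|apply tba_hom_K; exact Hk].
      - apply (whb_hom_comp (FW X) (FW Y) (K (FT Y)) g (hh Y)); [exact Hg|apply hh_hom].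
      - intro x. rewrite hh_gen. apply Hkl.
      - intro x. rewrite Hgl. apply hh_gen. }
    rewrite (DE_hom _ _ _ (hh X) k L Hk).
    assert (e : (fun a => k (hh X a)) = (fun a => hh Y (g a))) by (apply functional_extensionality; exact Hkh).
    rewrite e, (DE_map _ _ _ g (hh Y) L).
    intros Q HQ. unfold T_map. rewrite (th_DE' Y _ Q HQ).
    rewrite (th_DE' X L _ (pullback_prime _ _ g (WA X) Hg Q HQ)).
    apply den_map.
Qed.

End Main.


Theorem theorem6p10
  (FW : Type -> WHB) (iW : forall X : Type, X -> FW X)
  (HW : forall X : Type, is_free_whb (iW X))
  (FT : Type -> TBA) (iT : forall X : Type, X -> FT X)
  (HT : forall X : Type, is_free_tba (iT X)) :
  exists theta : forall X : Type, FT X -> pset (FW X),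
    (forall X : Type, iso_onto_T (theta X)) /\
    (forall (X Y : Type) (l : X -> Y) (g : FW X -> FW Y) (k : FT X -> FT Y),
       whb_hom g -> (forall x, g (iW X x) = iW Y (l x)) ->
       tba_hom k -> (forall x, k (iT X x) = iT Y (l x)) ->
       forall b : FT X, pseteq (T_map g (theta X b)) (theta Y (k b))).
Proof. exact (main_result FW iW HW FT iT HT). Qed.
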